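(* Let $r\ge 1$ and let $\epsilon,\xi_1,\dots,\xi_{r+1},p_1,\dots,p_{r+1},a_1,\dots,a_{r+1}$ be indeterminates. Put $s_i(z)=z-p_i$, $\Lambda(z)=\prod_{i=1}^{r+1}(z-a_i)$, and let $\mathrm{Wr}$ denote the relations (coefficientwise in $z$) $$\frac{\det_{1\le i,j\le r+1}\big[\xi_i^{j-1}\,s_i(z+\epsilon(j-1))\big]}{\det_{1\le i,j\le r+1}\big[\xi_i^{j-1}\big]}=\Lambda(z).$$ Define ${\rm Fun}(\epsilon{\rm Op}_Z^{\Lambda})=\mathbb{C}(\epsilon,\xi_i,p_i,a_i)/\mathrm{Wr}$. Let $m=(m_{ij})_{i,j=1}^{r+1}$ be the trigonometric Calogero–Moser Lax matrix $$m_{ii}=p_i-\epsilon\,\xi_i\sum_{k\neq i}\frac{1}{\xi_i-\xi_k},\qquad m_{ij}=\frac{\epsilon\,\xi_i}{\xi_i-\xi_j}\,\frac{\prod_{k\neq i}(\xi_i-\xi_k)}{\prod_{k\neq j}(\xi_j-\xi_k)}\ (i\neq j),$$ and define the tCM Hamiltonians $H^{tCM}_k(\epsilon,\{\xi_i\},\{p_i\})$ by $\det(z-m)=\sum_k H^{tCM}_k z^k$. Then there is an isomorphism of algebras $${\rm Fun}(\epsilon{\rm Op}_Z^{\Lambda})\cong \mathbb{C}(\epsilon,\xi_i,p_i,a_i)\big/\big(\text{relations } \det(z-m)=\Lambda(z)\text{ coefficientwise in } z\big).$$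
   Context: This algebra is the algebra of functions on the space of canonical $Z$-twisted Miura $(SL(r+1),\epsilon)$-opers on $\mathbb{P}^1$ (with $Z=\mathrm{diag}(\xi_1,\dots,\xi_{r+1})$ regular semisimple, and regular singularities exactly at the distinct roots $a_i$ of $\Lambda$); for such opers the section of the line subbundle has components $s_i(z)=z-p_i$ and the only defining relation is the $\epsilon$-shifted twisted Wronskian condition $\mathrm{Wr}$ above. *)

(* Defs.v *)
From HB Require Import structures.
From mathcomp Require Import all_boot all_order all_algebra.
Set Implicit Arguments. Unset Strict Implicit. Unset Printing Implicit Defensive.
Import Order.TTheory GRing.Theory Num.Theory.
Local Open Scope ring_scope.

Definition in_ideal (R : comRingType) (f : nat -> R) (N : nat) (x : R) : Prop :=
  exists c : nat -> R, x = \sum_(k < N) c k * f k.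

Definition Lambda (R : comRingType) (n : nat) (a : 'I_n -> R) : {poly R} :=
  \prod_(i < n) ('X - (a i)%:P).

(* Vandermonde-type matrix [xi_i^(j-1)] (0-indexed: xi_i^j) *)
Definition vdm (R : comRingType) (n : nat) (xi : 'I_n -> R) : 'M[R]_n :=
  \matrix_(i, j) (xi i ^+ j).

(* Matrix [xi_i^(j-1) s_i(z + eps (j-1))] with s_i(z) = z - p_i, 0-indexed *)
Definition twWr_mx (R : comRingType) (n : nat) (eps : R) (xi p : 'I_n -> R)
  : 'M[{poly R}]_n :=
  \matrix_(i, j) ((xi i ^+ j)%:P * ('X + (eps * j%:R - p i)%:P)).

Definition twWr (R : comUnitRingType) (n : nat) (eps : R) (xi p : 'I_n -> R)
  : {poly R} :=
  (\det (vdm xi))^-1 *: \det (twWr_mx eps xi p).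

Definition tCM_Lax (R : comUnitRingType) (n : nat) (eps : R) (xi p : 'I_n -> R)
  : 'M[R]_n :=
  \matrix_(i, j)
    (if i == j then p i - eps * xi i * \sum_(k < n | k != i) (xi i - xi k)^-1
     else eps * xi i / (xi i - xi j)
          * (\prod_(k < n | k != i) (xi i - xi k))
          / (\prod_(k < n | k != j) (xi j - xi k))).

Definition Wr_rel (R : comUnitRingType) (n : nat) (eps : R) (xi p a : 'I_n -> R)
  : nat -> R :=
  fun k => (twWr eps xi p - Lambda a)`_k.

Definition tCM_rel (R : comUnitRingType) (n : nat) (eps : R) (xi p a : 'I_n -> R)
  : nat -> R :=
  fun k => (char_poly (tCM_Lax eps xi p) - Lambda a)`_k.

(* Main.v *)
Require Import Defs.
From HB Require Import structures.
From mathcomp Require Import all_boot all_order all_algebra.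
From mathcomp Require Import ring fingroup perm.
Set Implicit Arguments. Unset Strict Implicit. Unset Printing Implicit Defensive.
Import Order.TTheory GRing.Theory Num.Theory.
Local Open Scope ring_scope.

Section Main.
Variable R : comUnitRingType.
Variable n : nat.
Variables (eps : R) (xi p : 'I_n -> R).
Hypothesis hxi : forall i j : 'I_n, i != j -> (xi i - xi j) \is a GRing.unit.

Definition pr (i : 'I_n) := \prod_(k < n | k != i) (xi i - xi k).
Definition S (i : 'I_n) := \sum_(k < n | k != i) (xi i - xi k)^-1.
Definition Pk (k : 'I_n) : {poly R} := \prod_(l < n | l != k) ('X - (xi l)%:P).
Definition L (k : 'I_n) : {poly R} := (pr k)^-1 *: Pk k.

Lemma pr_unit i : pr i \is a GRing.unit.
Proof. by apply: unitr_prod => k; rewrite eq_sym; apply: hxi. Qed.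

Lemma size_Pk k : (size (Pk k) <= n)%N.
Proof.
rewrite /Pk -big_filter size_prod_XsubC -rem_filter ?index_enum_uniq //.
rewrite size_rem ?mem_index_enum //.
rewrite /index_enum unlock -enumT size_enum_ord.
by case: n k => [[]|].
Qed.

Lemma L_sample k l : (L k).[xi l] = (k == l)%:R.
Proof.
rewrite /L hornerZ /Pk horner_prod.
have [<-|nkl] := eqVneq k l.
  rewrite /pr; under eq_bigr do rewrite hornerXsubC.
  by rewrite mulVr // pr_unit.
rewrite (bigD1 l) /=; last by rewrite eq_sym.
by rewrite hornerXsubC subrr mul0r mulr0.
Qed.


Lemma uniq_roots_map (s : seq 'I_n) : uniq s -> uniq_roots (map xi s).
Proof.
elim: s => //= x s IH /andP[xs us]; rewrite IH // andbT.
apply/allP => y /mapP[z zs ->]; rewrite /diff_roots mulrC eqxx /=.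
by apply: hxi; apply: contraNneq xs => <-.
Qed.

Lemma interpXn j : (j < n)%N -> 'X^j = \sum_(k < n) (xi k ^+ j) *: L k.
Proof.
move=> jn; apply/eqP; rewrite -subr_eq0; apply/eqP.
set D := _ - _.
have sD : (size D <= n)%N.
  rewrite /D (leq_trans (size_polyD _ _)) // geq_max size_polyN size_polyXn jn /=.
  apply: (big_ind (fun q : {poly R} => size q <= n)%N) => //.
  - by rewrite size_poly0.
  - by move=> q1 q2 h1 h2; rewrite (leq_trans (size_polyD _ _)) // geq_max h1 h2.
  - move=> k _; rewrite (leq_trans (size_scale_leq _ _)) //.
    by rewrite /L (leq_trans (size_scale_leq _ _)) // size_Pk.
have [//|nzD] := eqVneq D 0.
have allr : all (root D) (map xi (index_enum 'I_n)).
  apply/allP => x /mapP[l _ ->]; rewrite /root /D hornerD hornerN horner_sum hornerXn.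
  rewrite (bigD1 l) //= hornerZ L_sample eqxx mulr1 big1 ?addr0 ?subrr //.
  by move=> k kl; rewrite hornerZ L_sample (negPf kl) mulr0.
have := max_ring_poly_roots nzD allr (uniq_roots_map (index_enum_uniq 'I_n)).
rewrite size_map.
have -> : size (index_enum 'I_n) = n by rewrite /index_enum unlock -enumT size_enum_ord.
by move=> /leq_trans/(_ sD); rewrite ltnn.
Qed.


Lemma deriv_prod_horner (s : seq 'I_n) (P : pred 'I_n) (c : 'I_n -> R) (a : R) :
  (forall l, P l -> (a - c l) \is a GRing.unit) ->
  (\prod_(l <- s | P l) ('X - (c l)%:P))^`().[a] =
  (\prod_(l <- s | P l) (a - c l)) * \sum_(l <- s | P l) (a - c l)^-1.
Proof.
move=> hu; elim: s => [|x s IH]; first by rewrite !big_nil derivC horner0 mulr0.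
rewrite !big_cons; case: ifP => Px //.
rewrite derivM derivXsubC mul1r hornerD hornerM IH hornerXsubC horner_prod.
under [X in X + _]eq_bigr do rewrite hornerXsubC.
rewrite mulrDr mulrAC mulrV ?hu // mul1r.
congr (_ + _); exact: mulrA.
Qed.

Lemma L_deriv_diag i : (L i)^`().[xi i] = S i.
Proof.
rewrite /L derivZ hornerZ /Pk deriv_prod_horner; last by move=> l li; apply: hxi; rewrite eq_sym.
by rewrite -/(pr i) mulrA mulVr ?pr_unit ?mul1r.
Qed.

Lemma L_deriv_off k i : k != i ->
  (L k)^`().[xi i] = (xi i - xi k)^-1 * pr i / pr k.
Proof.
move=> ki; rewrite /L derivZ hornerZ /Pk (bigD1 i) /=; last by rewrite eq_sym.
rewrite derivM derivXsubC mul1r hornerD hornerM hornerXsubC subrr mul0r addr0.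
have E : pr i = (xi i - xi k) * \prod_(l < n | (l != i) && (l != k)) (xi i - xi l).
  by rewrite /pr (bigD1 k) // eq_sym.
rewrite horner_prod E mulrA mulVr ?hxi 1?eq_sym // mul1r mulrC.
congr (_ * _); apply: eq_big => [l|l _]; first by rewrite andbC.
by rewrite hornerXsubC.
Qed.

Lemma deriv_sumI (F : 'I_n -> {poly R}) : (\sum_(k < n) F k)^`() = \sum_(k < n) (F k)^`().
Proof. by elim/big_rec2: _ => [|k a b _ <-]; rewrite ?derivC ?derivD. Qed.

Lemma key_sum i j : (j < n)%N ->
  \sum_(k < n) (xi k ^+ j) * (xi i * (L k)^`().[xi i]) = j%:R * xi i ^+ j.
Proof.
move=> jn.
have h : (('X^j)^`()).[xi i] = \sum_(k < n) xi k ^+ j * (L k)^`().[xi i].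
  have E := interpXn jn.
  rewrite E deriv_sumI horner_sum; apply: eq_bigr => k _.
  by rewrite derivZ hornerZ.
under eq_bigr do rewrite mulrCA.
rewrite -mulr_sumr -h derivXn hornerMn hornerXn mulrnAr -mulr_natl.
by case: j {jn h} => [|j]; rewrite ?mul0r //= exprS.
Qed.


Definition m2 : 'M[R]_n := \matrix_(i, j)
  (if i == j then p i - eps * xi i * S i
   else - (eps * xi i / (xi i - xi j) * pr i / pr j)).

Lemma m2E i k : m2 i k = (i == k)%:R * p i - eps * (xi i * (L k)^`().[xi i]).
Proof.
rewrite mxE; have [<-|ik] := eqVneq i k.
  by rewrite L_deriv_diag mul1r mulrA.
by rewrite L_deriv_off 1?eq_sym // mul0r sub0r !mulrA.
Qed.

Lemma m2V i (j : 'I_n) : \sum_(k < n) m2 i k * xi k ^+ j = (p i - eps * j%:R) * xi i ^+ j.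
Proof.
under eq_bigr do rewrite m2E mulrBl.
rewrite sumrB (bigD1 i) //= eqxx mul1r big1 ?addr0; last first.
  by move=> k /negPf; rewrite eq_sym => ->; rewrite mul0r mul0r.
rewrite mulrBl; congr (_ - _).
rewrite -[RHS]mulrA -key_sum // mulr_sumr; apply: eq_bigr => k _.
ring.
Qed.

Lemma twWr_mx_eq : twWr_mx eps xi p = char_poly_mx m2 *m map_mx polyC (vdm xi).
Proof.
apply/matrixP => i j; have := m2V i j; move: (m2) => M hM; rewrite !mxE.
under eq_bigr do rewrite !mxE mulrBl.
rewrite sumrB (bigD1 i) //= eqxx mulr1n big1 ?addr0; last first.
  by move=> k /negPf; rewrite eq_sym => ->; rewrite mulr0n mul0r.
under eq_bigr do rewrite -rmorphM.
rewrite -rmorph_sum hM !rmorphM !rmorphB /= rmorphM /=.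
ring.
Qed.

Lemma vdm_unit : \det (vdm xi) \is a GRing.unit.
Proof.
have -> : vdm xi = (Vandermonde n (\row_j xi j))^T by apply/matrixP => i j; rewrite !mxE.
rewrite det_tr det_Vandermonde; apply: unitr_prod => i _; apply: unitr_prod => j ij.
by rewrite !mxE; apply: hxi; rewrite -val_eqE /= gtn_eqF.
Qed.

Lemma twWr_m2 : twWr eps xi p = char_poly m2.
Proof.
rewrite /twWr twWr_mx_eq det_mulmx det_map_mx /= -mul_polyC mulrCA -polyCM.
by rewrite mulVr ?vdm_unit // mulr1.
Qed.


Lemma prod_perm_cond (T : comNzRingType) (s : 'S_n) (c : 'I_n -> T) :
  \prod_(j < n) (if s j == j then 1 else c (s j)) =
  \prod_(j < n) (if s j == j then 1 else c j).
Proof.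
rewrite [RHS](reindex_inj (@perm_inj _ s)) /=; apply: eq_bigr => j _.
by rewrite (inj_eq perm_inj).
Qed.

Lemma char_poly_m2 : char_poly m2 = char_poly (tCM_Lax eps xi p).
Proof.
rewrite /char_poly /determinant [RHS](reindex_inj (@invg_inj _)) /=.
apply: eq_bigr => s _; rewrite odd_permV; congr (_ * _).
rewrite [RHS](reindex_inj (@perm_inj _ s)) /=.
pose E := fun j => if s j == j then 'X - (p j - eps * xi j * S j)%:P
                       else (eps * (xi j - xi (s j))^-1)%:P.
pose a := fun j => ((xi j * pr j)%:P : {poly R}).
pose b := fun j => (((pr j)^-1)%:P : {poly R}).
transitivity (\prod_(j < n) (E j * (if s j == j then 1 else a j) * (if s j == j then 1 else b (s j)))).
  apply: eq_bigr => j _; rewrite !mxE /E /a /b.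
  have [sj|sj] := eqVneq (s j) j.
    by rewrite mulr1n !mulr1.
  rewrite mulr0n sub0r -!rmorphM -rmorphN; congr (_%:P).
  rewrite opprK; ring.
transitivity (\prod_(j < n) (E j * (if s j == j then 1 else a (s j)) * (if s j == j then 1 else b j))).
  rewrite !big_split /=; congr (_ * _); first congr (_ * _).
    by rewrite prod_perm_cond.
  by rewrite prod_perm_cond.
apply: eq_bigr => j _; rewrite !mxE permK /E /a /b.
have [sj|sj] := eqVneq (s j) j.
  by rewrite sj mulr1n !mulr1.
rewrite mulr0n sub0r -!rmorphM -rmorphN; congr (_%:P).
rewrite -/(pr j) -/(pr (s j)) -[xi (s j) - xi j]opprB invrN; ring.
Qed.

End Main.

Unset Implicit Arguments.

Theorem mainTheorem1 (R : comUnitRingType) (r : nat) (hr : (1 <= r)%N)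
    (eps : R) (xi p a : 'I_r.+1 -> R)
    (hxi : forall i j : 'I_r.+1, i != j -> (xi i - xi j) \is a GRing.unit) :
  forall x : R,
    in_ideal (Wr_rel eps xi p a) r.+2 x <-> in_ideal (tCM_rel eps xi p a) r.+2 x.
Proof.
move=> x.
have E : twWr eps xi p = char_poly (tCM_Lax eps xi p).
  by rewrite (@twWr_m2 _ _ eps xi p hxi) (@char_poly_m2 _ _ eps xi p).
by rewrite /Wr_rel /tCM_rel E.
Qed.
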